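(* Let $H_i=H_i(x_{i-1},x_i)$ for $i\in[1,n]$ be two-terminal signed graphs and $G=\mathcal S(H_1,\dots,H_n)$ with $n=|\mathcal B(G)|\ge 2$. Suppose $\mathcal B_0(G)=\emptyset$, $\mathcal B_2(G)\neq\emptyset$, and every $H_i\in\mathcal B_2(G)$ has a $\Psi_{x_{i-1}x_i}(2)$-cover. Then exactly one of the following holds: (1) $G$ has a $\Psi_{x_0x_n}(2)$-cover in which no tadpole at $x_0$ contains the vertex $x_n$ and no tadpole at $x_n$ contains the vertex $x_0$; (2) $\mathcal B_2(G)=\{H_1\}$ and every $\Psi_{x_0x_1}(2)$-cover of $H_1$ contains a tadpole at $x_1$ containing the vertex $x_0$; (3) $\mathcal B_2(G)=\{H_n\}$ and every $\Psi_{x_{n-1}x_n}(2)$-cover of $H_n$ contains a tadpole at $x_{n-1}$ containing the vertex $x_n$.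
   Context: Signed graph: a finite graph (multiple edges and loops allowed) with signature $\sigma:E\to\{1,-1\}$. For a subgraph $S$, $\sigma(S)=\prod_{e\in S}\sigma(e)$; a path is positive if its sign is $1$, negative otherwise. A circuit is a connected $2$-regular subgraph; balanced if it has an even number of negative edges, unbalanced otherwise. A barbell is the union of two unbalanced circuits $C_1,C_2$ and a path $P$ such that either $P$ is trivial and $C_1,C_2$ share exactly one vertex, or $C_1,C_2$ are vertex-disjoint and $P$ joins them meeting $C_1\cup C_2$ only at its ends. A signed circuit is a balanced circuit or a barbell. A tadpole at $x$ is the union of an $xy$-path $P$ (possibly trivial) and an unbalanced circuit $C$ with $V(P)\cap V(C)=\{y\}$. A signed subgraph $6$-cover is a family (multiset) of subgraphs such that every edge lies in exactly $6$ members. For distinct vertices $x,y$ and $t\in[0,3]$, a $\Psi_{xy}(t)$-cover is a signed subgraph $6$-cover consisting of exactly $t$ positive $xy$-paths, $t$ negative $xy$-paths, $t$ tadpoles at $x$, $6-2t$ tadpoles at $y$, and some signed circuits. A two-terminal signed graph $H(x,y)$ is a connected nonempty signed graph with source terminal $x$ and target terminal $y$, where $x=y$ iff $H$ is a single negative loop. The series connection $\mathcal S(H_1,\dots,H_n)$ of pairwise disjoint $H_i(x_i,y_i)$ is obtained from $H_1\cup\dots\cup H_n$ by identifying $y_{i-1}$ with $x_i$ for $i\in[2,n]$, with source $x_1$ and target $y_n$. If $G=\mathcal S(H_1,\dots,H_n)$ with $n$ maximum, the $H_i$ are the parts of $G$, forming $\mathcal B(G)$; $\mathcal B_0(G)$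 = parts with equal terminals (negative loops), $\mathcal B_1(G)$ = parts with distinct terminals and one edge, $\mathcal B_2(G)$ = parts with distinct terminals and at least two edges. *)

(* Defs.v *)
From mathcomp Require Import all_boot.
Set Implicit Arguments. Unset Strict Implicit. Unset Printing Implicit Defensive.

(* A signed graph is given by a finite vertex type V, a finite edge type E,
   an endpoint map [ends : E -> V * V] (a loop has equal endpoints; the order
   of the pair is irrelevant) and [neg : E -> bool] (neg e = true iff
   sigma(e) = -1).  Subgraphs without isolated vertices are represented by
   their edge sets [{set E}]. *)
Section SignedGraph.
Variables (V E : finType) (ends : E -> V * V) (neg : E -> bool).

Definition incident (v : V) (e : E) : bool := ((ends e).1 == v) || ((ends e).2 == v).

Definition VS (S : {set E}) : {set V} := [set v | [exists e in S, incident v e]].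

(* degree of v in S (a loop counts twice) *)
Definition deg (S : {set E}) (v : V) : nat :=
  \sum_(e in S) (((ends e).1 == v) + ((ends e).2 == v)).

Definition adj (S : {set E}) : rel V := fun u v =>
  [exists e in S, (((ends e).1 == u) && ((ends e).2 == v)) ||
                  (((ends e).1 == v) && ((ends e).2 == u))].

Definition connected (S : {set E}) : Prop :=
  S != set0 /\ forall u v, u \in VS S -> v \in VS S -> connect (adj S) u v.

Definition negative (S : {set E}) : bool := odd #|[set e in S | neg e]|.

Definition circuit (C : {set E}) : Prop :=
  connected C /\ forall v, v \in VS C -> deg C v = 2.

Definition balanced_circuit (C : {set E}) : Prop := circuit C /\ ~~ negative C.
Definition unbalanced_circuit (C : {set E}) : Prop := circuit C /\ negative C.

Definition xypath (x y : V) (P : {set E}) : Prop :=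
  x != y /\ connected P /\ deg P x = 1 /\ deg P y = 1 /\
  forall v, v \in VS P -> v != x -> v != y -> deg P v = 2.

Definition barbell (B : {set E}) : Prop :=
  exists C1 C2 P : {set E},
    B = C1 :|: C2 :|: P /\ unbalanced_circuit C1 /\ unbalanced_circuit C2 /\
    [disjoint C1 & C2] /\
    ((P = set0 /\ #|VS C1 :&: VS C2| = 1) \/
     (VS C1 :&: VS C2 = set0 /\
      exists u v, u \in VS C1 /\ v \in VS C2 /\ xypath u v P /\
                  VS P :&: (VS C1 :|: VS C2) = [set u; v])).

Definition signed_circuit (S : {set E}) : Prop := balanced_circuit S \/ barbell S.

Definition tadpole (x : V) (T : {set E}) : Prop :=
  exists (y : V) (P C : {set E}),
    T = P :|: C /\ unbalanced_circuit C /\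
    ((P = set0 /\ y = x /\ x \in VS C) \/
     (xypath x y P /\ VS P :&: VS C = [set y])).

(* Psi_{xy}(t)-cover of the subgraph with edge set EH, given as five lists:
   positive xy-paths, negative xy-paths, tadpoles at x, tadpoles at y and
   signed circuits; every edge of EH lies in exactly 6 members. *)
Definition psi_cover (EH : {set E}) (x y : V) (t : nat)
  (Pp Pn Tx Ty Cs : seq {set E}) : Prop :=
  t <= 3 /\
  size Pp = t /\ size Pn = t /\ size Tx = t /\ size Ty = 6 - t.*2 /\
  (forall S, S \in Pp ++ Pn ++ Tx ++ Ty ++ Cs -> S \subset EH) /\
  (forall P, P \in Pp -> xypath x y P /\ ~~ negative P) /\
  (forall P, P \in Pn -> xypath x y P /\ negative P) /\
  (forall T, T \in Tx -> tadpole x T) /\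
  (forall T, T \in Ty -> tadpole y T) /\
  (forall C, C \in Cs -> signed_circuit C) /\
  (forall e, e \in EH -> count (fun S : {set E} => e \in S) (Pp ++ Pn ++ Tx ++ Ty ++ Cs) = 6).

Definition has_psi_cover (EH : {set E}) (x y : V) (t : nat) : Prop :=
  exists Pp Pn Tx Ty Cs, psi_cover EH x y t Pp Pn Tx Ty Cs.

(* edge set of the i-th part (0-indexed) *)
Definition part (p : E -> nat) (i : nat) : {set E} := [set e | p e == i].

Definition single_neg_loop (S : {set E}) : Prop :=
  exists e, S = [set e] /\ (ends e).1 = (ends e).2 /\ neg e.

(* G (whose edge set is all of E) is the series connection S(H_0,...,H_{m-1})
   with source s and target t, where H_i is the subgraph with edge set
   [part p i] and terminals x i, x i.+1. Vertices of distinct parts H_i, H_j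
   (i<j) are identified exactly along the chain of terminal identifications. *)
Definition series_decomp (s t : V) (m : nat) (x : nat -> V) (p : E -> nat) : Prop :=
  x 0 = s /\ x m = t /\ (forall e, p e < m) /\
  (forall i, i < m ->
     connected (part p i) /\ x i \in VS (part p i) /\ x i.+1 \in VS (part p i) /\
     (x i = x i.+1 <-> single_neg_loop (part p i))) /\
  (forall i j v, i < j -> j < m ->
     (v \in VS (part p i) /\ v \in VS (part p j) <->
      forall k, i < k <= j -> v = x k)).

Definition inB2 (x : nat -> V) (p : E -> nat) (i : nat) : Prop :=
  x i != x i.+1 /\ 2 <= #|part p i|.

End SignedGraph.

(* Main.v *)
Require Import Defs.
From mathcomp Require Import all_boot zify.
From Stdlib Require Import Classical.
Set Implicit Arguments. Unset Strict Implicit. Unset Printing Implicit Defensive.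


Ltac lia2 := let H1 := fresh in let H2 := fresh in move=> H1 H2; clear - H1 H2; lia.
Ltac lia1 := let H1 := fresh in move=> H1; clear - H1; lia.
Ltac setsolve := apply/setP => ?; rewrite !inE;
  repeat (match goal with |- context [?a \in ?S] => case: (a \in S) end); done.

Section Basics.
Variables (V E : finType) (ends : E -> V * V) (neg : E -> bool).
Local Notation VS := (VS ends).
Local Notation deg := (deg ends).
Local Notation adj := (adj ends).
Local Notation incident := (incident ends).
Local Notation connected := (connected ends).
Local Notation negative := (negative neg).
Local Notation psi_cover := (psi_cover ends neg).
Implicit Types (S T A B P C Q Bb : {set E}) (u v w a b x y : V) (e : E).
Implicit Types (Pp Pn Tx Ty Cs : seq {set E}).

Lemma VSP v S : reflect (exists2 e, e \in S & incident v e) (v \in VS S).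
Proof. rewrite inE; apply: (iffP existsP) => [[e /andP[]]|[e he hi]]; eauto.
by exists e; rewrite he hi. Qed.

Lemma VS_sub S T : S \subset T -> VS S \subset VS T.
Proof. move=> sST; apply/subsetP => v /VSP [e he hi]; apply/VSP; exists e => //.
exact: (subsetP sST). Qed.

Lemma VSU S T : VS (S :|: T) = VS S :|: VS T.
Proof. apply/setP => v; rewrite in_setU; apply/VSP/orP.
- by case=> e; rewrite inE => /orP[] h hi; [left|right]; apply/VSP; exists e.
- by case=> /VSP [e he hi]; exists e; rewrite // inE he ?orbT. Qed.

Lemma VS0 : VS set0 = set0.
Proof. by apply/setP => v; rewrite in_set0; apply/negbTE/negP => /VSP [e]; rewrite inE. Qed.

Lemma VS1 e : VS [set e] = [set (ends e).1; (ends e).2].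
Proof. apply/setP => v; rewrite in_set2; apply/VSP/idP.
- by case=> f; rewrite inE => /eqP -> /orP[] /eqP ->; rewrite eqxx ?orbT.
- by move=> h; exists e; rewrite ?inE // /incident (eq_sym _ v) (eq_sym _ v). Qed.

Definition mult e v : nat := ((ends e).1 == v) + ((ends e).2 == v).

Lemma degE S v : deg S v = \sum_(e in S) mult e v.
Proof. by []. Qed.

Lemma multP e v : (0 < mult e v) = incident v e.
Proof. by rewrite /mult /incident; case: eqP; case: eqP. Qed.

Lemma degU S T v : [disjoint S & T] -> deg (S :|: T) v = deg S v + deg T v.
Proof. move=> d; rewrite !degE -bigU //; apply: eq_bigl => e; rewrite !inE. done. Qed.

Lemma disjointD S T : [disjoint S & T :\: S].
Proof. by rewrite -setI_eq0 setIDA setIC setDIl setDv setI0. Qed.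

Lemma setUD_sub S T : S \subset T -> S :|: (T :\: S) = T.
Proof. move=> sST; apply/setP => e; rewrite !inE; case: (boolP (e \in S)) => //= h.
by rewrite (subsetP sST). Qed.

Lemma deg_sub S T v : S \subset T -> deg S v <= deg T v.
Proof. move=> sST; rewrite -(setUD_sub sST) degU ?leq_addr //; exact: disjointD. Qed.

Lemma deg_pos S v : (0 < deg S v) = (v \in VS S).
Proof. rewrite degE lt0n sum_nat_eq0; apply/forall_inPn/VSP.
- by case=> e eS h; exists e => //; rewrite -multP lt0n.
- by case=> e eS h; exists e => //; rewrite -lt0n multP.
Qed.

Lemma deg0 S v : v \notin VS S -> deg S v = 0.
Proof. by rewrite -deg_pos lt0n negbK => /eqP. Qed.

Lemma deg1 e v : deg [set e] v = mult e v.
Proof. by rewrite degE big_set1. Qed.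

Lemma negU S T : [disjoint S & T] -> negative (S :|: T) = negative S (+) negative T.
Proof. move=> d; rewrite /Defs.negative.
have -> : [set e in S :|: T | neg e] = [set e in S | neg e] :|: [set e in T | neg e].
  by apply/setP => e; rewrite !inE andb_orl.
have h0 : [set e in S | neg e] :&: [set e in T | neg e] = set0.
  apply/setP => e; rewrite !inE; move/disjointFr: d => /(_ e); case: (e \in S) => //.
  by move=> /(_ isT) ->; rewrite andbF.
by rewrite cardsU h0 cards0 subn0 oddD. Qed.

Lemma adj_sub S T : S \subset T -> subrel (adj S) (adj T).
Proof. move=> sST u v /exists_inP [e eS h]; apply/exists_inP; exists e => //.
exact: (subsetP sST). Qed.

Lemma connect_sub_set S T u v : S \subset T -> connect (adj S) u v -> connect (adj T) u v.
Proof. move=> sST; apply: connect_sub => a b h; apply: connect1; exact: adj_sub h. Qed.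

Lemma adjC S u v : adj S u v = adj S v u.
Proof. apply/exists_inP/exists_inP => -[e eS h]; exists e => //; by rewrite orbC. Qed.

Lemma connect_symS S : connect_sym (adj S).
Proof. apply: sym_connect_sym => u v; exact: adjC. Qed.

Lemma connectedU S T w : connected S -> connected T -> w \in VS S -> w \in VS T ->
  connected (S :|: T).
Proof. move=> [S0 cS] [T0 cT] wS wT; split.
  apply: contraNneq S0 => h; apply/eqP/setP => e; rewrite inE.
  by apply/negP => eS; move/setP: h => /(_ e); rewrite !inE eS.
have sS := subsetUl S T; have sT := subsetUr S T.
have cw : forall z, z \in VS (S :|: T) -> connect (adj (S :|: T)) z w.
  move=> z; rewrite VSU inE => /orP[] h.
  - exact: connect_sub_set sS (cS _ _ h wS).
  - exact: connect_sub_set sT (cT _ _ h wT).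
move=> u v hu hv; apply: connect_trans (cw _ hu) _.
by rewrite connect_symS; apply: cw.
Qed.

Lemma connected1 e : connected [set e].
Proof. split. by apply/set0Pn; exists e; rewrite inE.
have a12 : adj [set e] (ends e).1 (ends e).2.
  by apply/exists_inP; exists e; rewrite ?inE ?eqxx.
have a21 : adj [set e] (ends e).2 (ends e).1 by rewrite adjC.
move=> u v; rewrite VS1 !inE => /orP[] /eqP -> /orP[] /eqP ->;
  by [rewrite connect0 | apply: connect1].
Qed.


Local Notation xypath := (xypath ends).
Local Notation tadpole := (tadpole ends neg).
Local Notation barbell := (barbell ends neg).
Local Notation circuit := (circuit ends).
Local Notation signed_circuit := (signed_circuit ends neg).

Lemma xypath_sym a b P : xypath a b P -> xypath b a P.
Proof. case=> ab [c [da [db h]]]; do !split => //; first by rewrite eq_sym.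
by move=> v hv h1 h2; apply: h. Qed.

Lemma xypath_inl a b P : xypath a b P -> a \in VS P.
Proof. by case=> _ [_ [da _]]; rewrite -deg_pos da. Qed.

Lemma xypath_inr a b P : xypath a b P -> b \in VS P.
Proof. by case=> _ [_ [_ [db _]]]; rewrite -deg_pos db. Qed.

Lemma xypath_neq a b P : xypath a b P -> a != b.
Proof. by case. Qed.

Lemma disj_sub A B S T : [disjoint A & B] -> S \subset A -> T \subset B -> [disjoint S & T].
Proof. move=> d sA tB; apply: disjointWl sA _; rewrite disjoint_sym; apply: disjointWl tB _.
by rewrite disjoint_sym. Qed.

Lemma glue_path A B a w b P1 P2 : [disjoint A & B] ->
  (forall v, v \in VS A -> v \in VS B -> v = w) -> P1 \subset A -> P2 \subset B ->
  xypath a w P1 -> xypath w b P2 -> xypath a b (P1 :|: P2).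
Proof.
move=> dAB hAB s1 s2 h1 h2.
have d12 := disj_sub dAB s1 s2.
have hv : forall v, v \in VS P1 -> v \in VS P2 -> v = w.
  by move=> v v1 v2; apply: hAB; [exact: (subsetP (VS_sub s1)) | exact: (subsetP (VS_sub s2))].
have a1 := xypath_inl h1; have b2 := xypath_inr h2; have w1 := xypath_inr h1; have w2 := xypath_inl h2.
have aw := xypath_neq h1; have wb := xypath_neq h2.
have a2 : a \notin VS P2 by apply/negP => /(hv _ a1) /eqP; rewrite (negbTE aw).
have b1 : b \notin VS P1 by apply/negP => /hv /(_ b2) /eqP; rewrite eq_sym (negbTE wb).
case: h1 => _ [c1 [da1 [dw1 i1]]]; case: h2 => _ [c2 [dw2 [db2 i2]]].
split. by apply: contraNneq a2 => ->.
split. exact: connectedU c1 c2 w1 w2.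
rewrite !degU // (deg0 a2) (deg0 b1) da1 db2; split => //; split => //.
move=> v; rewrite VSU inE degU // => hv12 va vb.
case: (eqVneq v w) => [->|vw]; first by rewrite dw1 dw2.
case/orP: hv12 => hvi.
- have : v \notin VS P2 by apply/negP => /(hv _ hvi) /eqP; rewrite (negbTE vw).
  by move/deg0 => ->; rewrite i1.
- have : v \notin VS P1 by apply/negP => /hv /(_ hvi) /eqP; rewrite (negbTE vw).
  by move/deg0 => ->; rewrite i2.
Qed.

Lemma edge_path a b e : a != b -> a \in VS [set e] -> b \in VS [set e] -> xypath a b [set e].
Proof.
rewrite VS1 !inE => ab ha hb.
have e12 : (ends e).1 != (ends e).2.
  by apply: contraNneq ab => h; move: ha hb; rewrite h !orbb => /eqP -> /eqP ->.
have m1 : forall v, (v == (ends e).1) || (v == (ends e).2) -> mult e v = 1.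
  move=> v /orP[] /eqP ->; rewrite /mult eqxx ?(negbTE e12) //.
  by rewrite eq_sym (negbTE e12).
split => //; split; first exact: connected1.
rewrite !deg1 (m1 _ ha) (m1 _ hb); do !split => //.
move=> v; rewrite VS1 !inE => hv va vb; exfalso.
move: ab va vb; case/orP: ha => /eqP ->; case/orP: hb => /eqP ->; case/orP: hv => /eqP ->;
  by rewrite ?eqxx.
Qed.

Lemma circuit_deg C v : circuit C -> v \in VS C -> deg C v = 2.
Proof. by case=> _ h; apply: h. Qed.

Lemma tadpole_deg x T v : tadpole x T -> v \in VS T -> v != x -> 2 <= deg T v.
Proof.
case=> y [P [C [-> [[cC _] hPC]]]] vT vx.
case: (boolP (v \in VS C)) => vC.
  by rewrite -(circuit_deg cC vC); apply: deg_sub; apply: subsetUr.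
move: vT; rewrite VSU inE (negbTE vC) orbF => vP.
case: hPC => [[P0 _]|[hP hPC]]; first by move: vP; rewrite P0 VS0 inE.
have vy : v != y by apply: contraNneq vC => ->; move/setP: hPC => /(_ y); rewrite !inE eqxx => /andP[].
case: hP => _ [_ [_ [_ hi]]]; rewrite -(hi v vP vx vy).
by apply: deg_sub; apply: subsetUl.
Qed.

Lemma barbell_deg Bb v : barbell Bb -> v \in VS Bb -> 2 <= deg Bb v.
Proof.
case=> C1 [C2 [P [-> [[c1 _] [[c2 _] [_ hP]]]]]] vB.
case: (boolP (v \in VS C1)) => v1.
  by rewrite -(circuit_deg c1 v1); apply: deg_sub; rewrite -setUA; apply: subsetUl.
case: (boolP (v \in VS C2)) => v2.
  by rewrite -(circuit_deg c2 v2); apply: deg_sub; rewrite setUAC; apply: subsetUr.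
move: vB; rewrite !VSU !in_setU (negbTE v1) (negbTE v2) /= => vP.
case: hP => [[P0 _]|[_ [u [w [u1 [w2 [hP _]]]]]]]; first by move: vP; rewrite P0 VS0 inE.
have vu : v != u by apply: contraNneq v1 => ->.
have vw : v != w by apply: contraNneq v2 => ->.
case: hP => _ [_ [_ [_ hi]]]; rewrite -(hi v vP vu vw).
by apply: deg_sub; apply: subsetUr.
Qed.

Lemma signed_circuit_deg C v : signed_circuit C -> v \in VS C -> 2 <= deg C v.
Proof. case=> [[cC _]|bC] vC; last exact: barbell_deg.
by rewrite (circuit_deg cC vC). Qed.


Lemma inter1 (S1 S2 : {set V}) y : (forall v, v \in S1 -> v \in S2 -> v = y) ->
  y \in S1 -> y \in S2 -> S1 :&: S2 = [set y].
Proof. move=> h y1 y2; apply/setP => v; rewrite !inE.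
apply/idP/idP => [/andP[h1 h2]|/eqP ->]; last by rewrite y1 y2.
by apply/eqP; exact: h. Qed.

Lemma interP (S1 S2 : {set V}) y v : S1 :&: S2 = [set y] -> v \in S1 -> v \in S2 -> v = y.
Proof. move/setP => /(_ v); rewrite !inE => h h1 h2; apply/eqP; by rewrite -h h1 h2. Qed.

Lemma interPy (S1 S2 : {set V}) y : S1 :&: S2 = [set y] -> y \in S1 /\ y \in S2.
Proof. by move/setP => /(_ y); rewrite !inE eqxx => /andP. Qed.

Lemma VSsubP S A v : S \subset A -> v \in VS S -> v \in VS A.
Proof. by move=> sA; apply: (subsetP (VS_sub sA)). Qed.

Lemma tadpole_path A B w b T Q : [disjoint A & B] ->
  (forall v, v \in VS A -> v \in VS B -> v = w) -> T \subset A -> Q \subset B ->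
  tadpole w T -> xypath w b Q -> tadpole b (T :|: Q).
Proof.
move=> dAB hAB sT sQ [y [P [C [eT [uC hPC]]]]] hQ; subst T.
have sC : C \subset A by exact: subset_trans (subsetUr _ _) sT.
have sP : P \subset A by exact: subset_trans (subsetUl _ _) sT.
case: hPC => [[P0 [yw wC]]|[hP iPC]]; first subst P y.
- exists w, Q, C; split; first by rewrite set0U setUC.
  split => //; right; split; first exact: xypath_sym.
  apply: inter1 => //; first by move=> v vQ vC; apply: hAB; [exact: VSsubP vC|exact: VSsubP vQ].
  exact: xypath_inl hQ.
- exists y, (Q :|: P), C; split; first by setsolve.
  split => //; right; split.
    apply: (@glue_path B A); [by rewrite disjoint_sym | by move=> v vB vA; apply: hAB
      | by [] | by [] | exact: xypath_sym | by []].
  have [yP yC] := interPy iPC.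
  apply: inter1; last exact: yC; last by rewrite VSU in_setU yP orbT.
  move=> v; rewrite VSU in_setU => /orP[] vi vC; last exact: (interP iPC).
  have vw : v = w by apply: hAB; [exact: VSsubP vC|exact: VSsubP vi].
  subst v; exfalso; move: (xypath_neq hP); rewrite (interP iPC (xypath_inl hP) vC).
  by rewrite eqxx.
Qed.

Lemma tadpoles_barbell A B w T1 T2 : [disjoint A & B] ->
  (forall v, v \in VS A -> v \in VS B -> v = w) -> T1 \subset A -> T2 \subset B ->
  tadpole w T1 -> tadpole w T2 -> barbell (T1 :|: T2).
Proof.
move=> dAB hAB sT1 sT2 [y1 [P1 [C1 [eT1 [uC1 h1]]]]] [y2 [P2 [C2 [eT2 [uC2 h2]]]]]; subst T1 T2.
have sC1 : C1 \subset A by exact: subset_trans (subsetUr _ _) sT1.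
have sP1 : P1 \subset A by exact: subset_trans (subsetUl _ _) sT1.
have sC2 : C2 \subset B by exact: subset_trans (subsetUr _ _) sT2.
have sP2 : P2 \subset B by exact: subset_trans (subsetUl _ _) sT2.
have dC : [disjoint C1 & C2] := disj_sub dAB sC1 sC2.
have hC : forall v, v \in VS C1 -> v \in VS C2 -> v = w.
  by move=> v v1 v2; apply: hAB; [exact: VSsubP v1|exact: VSsubP v2].
have wnot : forall P C y, xypath w y P -> P :&: C = P :&: C -> VS P :&: VS C = [set y] -> w \notin VS C.
  move=> P C y hP _ i; apply/negP => wC; move: (xypath_neq hP).
  by rewrite (interP i (xypath_inl hP) wC) eqxx.
have C12 : forall (P Q : {set E}) y, xypath w y P -> VS P :&: VS C1 = [set y] -> VS C1 :&: VS C2 = set0.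
  move=> P Q y hP i; apply/setP => v; rewrite in_setI in_set0; apply/negP => /andP[v1 v2].
  move: (hC v v1 v2) => vw; subst v; by move: (wnot _ _ _ hP (erefl _) i); rewrite v1.
have C21 : forall (P Q : {set E}) y, xypath w y P -> VS P :&: VS C2 = [set y] -> VS C1 :&: VS C2 = set0.
  move=> P Q y hP i; apply/setP => v; rewrite in_setI in_set0; apply/negP => /andP[v1 v2].
  move: (hC v v1 v2) => vw; subst v; by move: (wnot _ _ _ hP (erefl _) i); rewrite v2.
case: h1 => [[P10 [yw1 w1]]|[hP1 i1]]; case: h2 => [[P20 [yw2 w2]]|[hP2 i2]]; try subst P1 y1; try subst P2 y2.
- exists C1, C2, set0; split; first by setsolve.
  do 3!split => //; left; split => //.
  by rewrite (inter1 hC w1 w2) cards1.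
- exists C1, C2, P2; split; first by setsolve.
  do 3!split => //; right; split; first exact: (C21 P2 P2 y2).
  exists w, y2; have [y2P y2C] := interPy i2; do 3!split => //.
  apply/setP => v; rewrite in_setI in_set2 ?VSU !in_setU; apply/idP/idP.
  + case/andP => vP /orP[] vC.
    * by rewrite (hAB v (VSsubP sC1 vC) (VSsubP sP2 vP)) eqxx.
    * by rewrite (interP i2 vP vC) eqxx orbT.
  + case/orP => /eqP ->; first by rewrite (xypath_inl hP2) w1.
    by rewrite y2P y2C orbT.
- exists C1, C2, P1; split; first by setsolve.
  do 3!split => //; right; split; first exact: (C12 P1 P1 y1).
  exists y1, w; have [y1P y1C] := interPy i1; do 3!split => //; first exact: xypath_sym.
  apply/setP => v; rewrite in_setI in_set2 ?VSU !in_setU; apply/idP/idP.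
  + case/andP => vP /orP[] vC.
    * by rewrite (interP i1 vP vC) eqxx.
    * by rewrite (hAB v (VSsubP sP1 vP) (VSsubP sC2 vC)) eqxx orbT.
  + case/orP => /eqP ->; first by rewrite y1P y1C.
    by rewrite (xypath_inl hP1) w2 orbT.
- exists C1, C2, (P1 :|: P2); split.
    by setsolve.
  do 3!split => //; right; split; first exact: (C12 P1 P1 y1).
  have [y1P y1C] := interPy i1; have [y2P y2C] := interPy i2.
  have w1 := wnot _ _ _ hP1 (erefl _) i1; have w2 := wnot _ _ _ hP2 (erefl _) i2.
  exists y1, y2; do 3!split => //.
    by apply: (glue_path dAB hAB sP1 sP2) => //; exact: xypath_sym.
  apply/setP => v; rewrite in_setI in_set2 ?VSU !in_setU; apply/idP/idP.
  + case/andP => /orP[] vP /orP[] vC.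
    * by rewrite (interP i1 vP vC) eqxx.
    * have vw := hAB v (VSsubP sP1 vP) (VSsubP sC2 vC); by subst v; rewrite vC in w2.
    * have vw := hAB v (VSsubP sC1 vC) (VSsubP sP2 vP); by subst v; rewrite vC in w1.
    * by rewrite (interP i2 vP vC) eqxx orbT.
  + case/orP => /eqP ->; first by rewrite y1P y1C.
    by rewrite y2P y2C !orbT.
Qed.

Definition cnt e s := count (fun S : {set E} => e \in S) s.

Lemma cnt_cat e s1 s2 : cnt e (s1 ++ s2) = cnt e s1 + cnt e s2.
Proof. exact: count_cat. Qed.

Lemma cnt_mapU e B s : e \notin B -> cnt e (map (fun S => S :|: B) s) = cnt e s.
Proof. move=> eB; rewrite /cnt count_map; apply: eq_count => S /=; by rewrite in_setU (negbTE eB) orbF. Qed.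

Lemma cnt_mapUin e B s : e \in B -> cnt e (map (fun S => S :|: B) s) = size s.
Proof. move=> eB; rewrite /cnt count_map -[RHS](count_predT s); apply: eq_count => S /=; by rewrite in_setU eB orbT. Qed.

Lemma cnt_mapD f e s : f != e -> cnt f (map (fun S => S :\ e) s) = cnt f s.
Proof. move=> fe; rewrite /cnt count_map; apply: eq_count => S /=; by rewrite !inE fe. Qed.

Lemma cnt_out e A s : (forall S, S \in s -> S \subset A) -> e \notin A -> cnt e s = 0.
Proof. move=> h eA; apply/eqP; rewrite -leqn0 leqNgt -has_count; apply/hasPn => S /h sA /=.
by apply: contra eA; apply: (subsetP sA). Qed.

Lemma psi_swap EH a b Pp Pn Tx Ty Cs : psi_cover EH a b 2 Pp Pn Tx Ty Cs ->
  psi_cover EH b a 2 Pp Pn Ty Tx Cs.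
Proof.
case=> t3 [sp [sn [sx [sy [hs [hp [hn [hx [hy [hc hcnt]]]]]]]]]].
split => //; split => //; split => //; split; first by rewrite sy.
split; first by rewrite sx.
split. move=> S hS; apply: hs; move: hS; rewrite !mem_cat.
  by case: (S \in Pp); case: (S \in Pn); case: (S \in Tx); case: (S \in Ty).
split. by move=> P /hp [h1 h2]; split => //; apply: xypath_sym.
split. by move=> P /hn [h1 h2]; split => //; apply: xypath_sym.
do 3!split => //.
move=> e /hcnt; rewrite -!/(cnt _ _) !cnt_cat; lia.
Qed.


Lemma psi_sub EH a b Pp Pn Tx Ty Cs S : psi_cover EH a b 2 Pp Pn Tx Ty Cs ->
  [|| S \in Pp, S \in Pn, S \in Tx, S \in Ty | S \in Cs] -> S \subset EH.
Proof. by case=> _ [_ [_ [_ [_ [hs _]]]]] h; apply: hs; rewrite !mem_cat. Qed.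

Lemma notin_sub e S B : S \subset B -> e \notin B -> (e \in S) = false.
Proof. move=> sB eB; apply/negbTE; apply: contra eB; exact: (subsetP sB). Qed.

Lemma cover_path A B a w b Pp Pn Tx Ty Cs : [disjoint A & B] ->
  (forall v, v \in VS A -> v \in VS B -> v = w) ->
  psi_cover A a w 2 Pp Pn Tx Ty Cs -> xypath w b B ->
  exists Pp' Pn' Ty', psi_cover (A :|: B) a b 2 Pp' Pn' Tx Ty' Cs /\
    (forall T, T \in Ty' -> exists2 T0, T0 \in Ty & T = T0 :|: B).
Proof.
move=> dAB hAB K hB.
have sub : forall S, [|| S \in Pp, S \in Pn, S \in Tx, S \in Ty | S \in Cs] -> S \subset A.
  by move=> S; apply: psi_sub K.
have sAB : A \subset A :|: B := subsetUl A B.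
case: (K) => _ [sp [sn [sx [sy [_ [hp [hn [hx [hy [hc hcnt]]]]]]]]]].
pose f := fun S => S :|: B.
have glue : forall P, P \subset A -> xypath a w P -> xypath a b (P :|: B) /\
   negative (P :|: B) = negative P (+) negative B.
  move=> P sP hP; split; first exact: (glue_path dAB hAB sP (subxx B) hP hB).
  by apply: negU; apply: disj_sub dAB sP (subxx B).
exists (map f (if negative B then Pn else Pp)), (map f (if negative B then Pp else Pn)), (map f Ty).
split; last by move=> T /mapP [T0 h ->]; exists T0.
split => //; split; first by rewrite size_map; case: ifP.
split; first by rewrite size_map; case: ifP.
split => //; split; first by rewrite size_map sy.
split.
  move=> S; rewrite !mem_cat => /orP[|/orP[|/orP[|/orP[]]]].
  - case/mapP => S0 h ->; apply: setSU; apply: sub.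
    by move: h; case: ifP => _ ->; rewrite ?orbT.
  - case/mapP => S0 h ->; apply: setSU; apply: sub.
    by move: h; case: ifP => _ ->; rewrite ?orbT.
  - by move=> h; apply: subset_trans sAB; apply: sub; rewrite h ?orbT.
  - case/mapP => S0 h ->; apply: setSU; apply: sub; by rewrite h ?orbT.
  - by move=> h; apply: subset_trans sAB; apply: sub; rewrite h ?orbT.
split.
  move=> P /mapP [P0 h ->].
  have sP0 : P0 \subset A by apply: sub; move: h; case: ifP => _ ->; rewrite ?orbT.
  have g := glue _ sP0.
  case nB: (negative B) in h *.
  - by have [hxy ng] := hn _ h; have [g1 g2] := g hxy; split => //; rewrite g2 ng nB.
  - by have [hxy ng] := hp _ h; have [g1 g2] := g hxy; split => //; rewrite g2 nB (negbTE ng).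
split.
  move=> P /mapP [P0 h ->].
  have sP0 : P0 \subset A by apply: sub; move: h; case: ifP => _ ->; rewrite ?orbT.
  have g := glue _ sP0.
  case nB: (negative B) in h *.
  - by have [hxy ng] := hp _ h; have [g1 g2] := g hxy; split => //; rewrite g2 nB (negbTE ng).
  - by have [hxy ng] := hn _ h; have [g1 g2] := g hxy; split => //; rewrite g2 ng nB.
split => //.
split.
  move=> T /mapP [T0 h ->].
  apply: (tadpole_path dAB hAB _ (subxx B)) => //; last exact: hy.
  by apply: sub; rewrite h ?orbT.
split => //.
move=> e; rewrite in_setU => /orP[] he.
- have eB : e \notin B by apply: contraL he; move/disjointFl: dAB => h /h ->.
  move: (hcnt e he); rewrite -!/(cnt _ _) !cnt_cat !cnt_mapU //.
  by case: ifP => _; lia.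
- have eA : e \notin A by apply: contraL he; move/disjointFr: dAB => h /h ->.
  rewrite -!/(cnt _ _) !cnt_cat !cnt_mapUin // sy.
  rewrite (@cnt_out e A Tx) // ?(@cnt_out e A Cs) //; last first.
    by move=> S h; apply: sub; rewrite h ?orbT.
    by move=> S h; apply: sub; rewrite h ?orbT.
  by case: ifP => _; rewrite ?sp ?sn.
Qed.

Lemma size2 (s : seq {set E}) : size s = 2 -> exists X Y : {set E}, s = [:: X; Y].
Proof. by case: s => [|X [|Y [|]]] //= _; exists X, Y. Qed.

Lemma cover_cover A B a w b Pp1 Pn1 Tx1 Ty1 Cs1 Pp2 Pn2 Tx2 Ty2 Cs2 :
  [disjoint A & B] -> (forall v, v \in VS A -> v \in VS B -> v = w) ->
  psi_cover A a w 2 Pp1 Pn1 Tx1 Ty1 Cs1 -> psi_cover B w b 2 Pp2 Pn2 Tx2 Ty2 Cs2 ->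
  exists Pp Pn Cs, psi_cover (A :|: B) a b 2 Pp Pn Tx1 Ty2 Cs.
Proof.
move=> dAB hAB K1 K2.
have sub1 : forall S, [|| S \in Pp1, S \in Pn1, S \in Tx1, S \in Ty1 | S \in Cs1] -> S \subset A.
  by move=> S; apply: psi_sub K1.
have sub2 : forall S, [|| S \in Pp2, S \in Pn2, S \in Tx2, S \in Ty2 | S \in Cs2] -> S \subset B.
  by move=> S; apply: psi_sub K2.
case: (K1) => _ [sp1 [sn1 [sx1 [sy1 [_ [hp1 [hn1 [hx1 [hy1 [hc1 hcnt1]]]]]]]]]].
case: (K2) => _ [sp2 [sn2 [sx2 [sy2 [_ [hp2 [hn2 [hx2 [hy2 [hc2 hcnt2]]]]]]]]]].
move: (size2 sp1) (size2 sn1) (size2 sy1) (size2 sp2) (size2 sn2) (size2 sx2) => 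
  [p1 [p2 ePp1]] [n1 [n2 ePn1]] [t1 [t2 eTy1]] [q1 [q2 ePp2]] [r1 [r2 ePn2]] [s1 [s2 eTx2]].
subst Pp1 Pn1 Ty1 Pp2 Pn2 Tx2.
have m2 : forall (X Y : {set E}), X \in [:: X; Y] /\ Y \in [:: X; Y].
  by move=> X Y; rewrite !inE !eqxx orbT.
have sA : forall X, X \in [:: p1; p2; n1; n2; t1; t2] -> X \subset A.
  move=> X; rewrite !inE => h; apply: sub1.
  by case/orP: h => [/eqP->|/orP[/eqP->|/orP[/eqP->|/orP[/eqP->|/orP[/eqP->|/eqP->]]]]];
    rewrite !inE ?eqxx ?orbT.
have sB : forall X, X \in [:: q1; q2; r1; r2; s1; s2] -> X \subset B.
  move=> X; rewrite !inE => h; apply: sub2.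
  by case/orP: h => [/eqP->|/orP[/eqP->|/orP[/eqP->|/orP[/eqP->|/orP[/eqP->|/eqP->]]]]];
    rewrite !inE ?eqxx ?orbT.
have gp : forall X Y, X \in [:: p1; p2; n1; n2; t1; t2] -> Y \in [:: q1; q2; r1; r2; s1; s2] ->
    xypath a w X -> xypath w b Y -> xypath a b (X :|: Y) /\ negative (X :|: Y) = negative X (+) negative Y.
  move=> X Y hX hY h1 h2; split; first exact: (glue_path dAB hAB (sA _ hX) (sB _ hY)).
  by apply: negU; apply: disj_sub dAB (sA _ hX) (sB _ hY).
have hp1' := fun X (h : X \in [:: p1; p2]) => hp1 X h.
have [P1 P2] := m2 p1 p2; have [N1 N2] := m2 n1 n2; have [Q1 Q2] := m2 q1 q2.
have [R1 R2] := m2 r1 r2; have [T1 T2] := m2 t1 t2; have [S1 S2] := m2 s1 s2.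
have [hpp1 gp1] := hp1 _ P1; have [hpp2 gp2] := hp1 _ P2.
have [hnn1 gn1] := hn1 _ N1; have [hnn2 gn2] := hn1 _ N2.
have [hqq1 gq1] := hp2 _ Q1; have [hqq2 gq2] := hp2 _ Q2.
have [hrr1 gr1] := hn2 _ R1; have [hrr2 gr2] := hn2 _ R2.
have in6 : forall X1 X2 X3 X4 X5 X6 : {set E},
  [/\ X1 \in [:: X1; X2; X3; X4; X5; X6], X2 \in [:: X1; X2; X3; X4; X5; X6],
      X3 \in [:: X1; X2; X3; X4; X5; X6], X4 \in [:: X1; X2; X3; X4; X5; X6] &
      [/\ X5 \in [:: X1; X2; X3; X4; X5; X6] & X6 \in [:: X1; X2; X3; X4; X5; X6]]].
  by move=> *; rewrite !inE !eqxx !orbT.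
have [ip1 ip2 in1 in2 [it1 it2]] := in6 p1 p2 n1 n2 t1 t2.
have [iq1 iq2 ir1 ir2 [is1 is2]] := in6 q1 q2 r1 r2 s1 s2.
exists [:: p1 :|: q1; n1 :|: r1], [:: p2 :|: r2; n2 :|: q2], ([:: t1 :|: s1; t2 :|: s2] ++ Cs1 ++ Cs2).
split => //; split => //; split => //; split => //; split => //.
split.
  move=> S; rewrite !mem_cat !inE.
  case/orP => [/orP[/eqP->|/eqP->]|]; first by apply: setUSS; [apply: sA| apply: sB].
    by apply: setUSS; [apply: sA| apply: sB].
  case/orP => [/orP[/eqP->|/eqP->]|]; first by apply: setUSS; [apply: sA| apply: sB].
    by apply: setUSS; [apply: sA| apply: sB].
  case/orP => [h|]; first by apply: subset_trans (subsetUl _ _); apply: sub1; rewrite h ?orbT.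
  case/orP => [h|]; first by apply: subset_trans (subsetUr _ _); apply: sub2; rewrite h ?orbT.
  case/orP => [/orP[/eqP->|/eqP->]|]; first by apply: setUSS; [apply: sA| apply: sB].
    by apply: setUSS; [apply: sA| apply: sB].
  case/orP => [h|h]; first by apply: subset_trans (subsetUl _ _); apply: sub1; rewrite h ?orbT.
  by apply: subset_trans (subsetUr _ _); apply: sub2; rewrite h ?orbT.
split.
  move=> P; rewrite !inE => /orP[] /eqP ->.
  - by have [g1 g2] := gp _ _ ip1 iq1 hpp1 hqq1; rewrite g2 (negbTE gp1) (negbTE gq1).
  - by have [g1 g2] := gp _ _ in1 ir1 hnn1 hrr1; rewrite g2 gn1 gr1.
split.
  move=> P; rewrite !inE => /orP[] /eqP ->.
  - by have [g1 g2] := gp _ _ ip2 ir2 hpp2 hrr2; rewrite g2 (negbTE gp2) gr2.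
  - by have [g1 g2] := gp _ _ in2 iq2 hnn2 hqq2; rewrite g2 (negbTE gq2) gn2.
split => //; split => //.
split.
  move=> C; rewrite mem_cat => /orP[|]; last first.
    by rewrite mem_cat => /orP[]; [apply: hc1 | apply: hc2].
  rewrite !inE => /orP[] /eqP -> ; right.
  - by apply: (tadpoles_barbell dAB hAB (sA _ it1) (sB _ is1)); [apply: hy1 | apply: hx2].
  - by apply: (tadpoles_barbell dAB hAB (sA _ it2) (sB _ is2)); [apply: hy1 | apply: hx2].
move=> e; rewrite in_setU => /orP[] he.
- have eB : e \notin B by apply: contraL he; move/disjointFl: dAB => h /h ->.
  have f : forall X, X \in [:: q1; q2; r1; r2; s1; s2] -> (e \in X) = false.
    by move=> X hX; apply: notin_sub (sB _ hX) eB.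
  have c0 : cnt e (Ty2 ++ Cs2) = 0.
    by apply: (cnt_out (A:=B)) => // S; rewrite mem_cat => h; apply: sub2; rewrite h !orbT.
  move: (hcnt1 e he) c0; rewrite -!/(cnt _ _) !cnt_cat /cnt /= !in_setU.
  rewrite (f _ iq1) (f _ iq2) (f _ ir1) (f _ ir2) (f _ is1) (f _ is2) !orbF.
  move=> H1 H2; clear -H1 H2; lia.
- have eA : e \notin A by apply: contraL he; move/disjointFr: dAB => h /h ->.
  have f : forall X, X \in [:: p1; p2; n1; n2; t1; t2] -> (e \in X) = false.
    by move=> X hX; apply: notin_sub (sA _ hX) eA.
  have c0 : cnt e (Tx1 ++ Cs1) = 0.
    by apply: (cnt_out (A:=A)) => // S; rewrite mem_cat => /orP[] h; apply: sub1; rewrite h !orbT.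
  move: (hcnt2 e he) c0; rewrite -!/(cnt _ _) !cnt_cat /cnt /= !in_setU.
  rewrite (f _ ip1) (f _ ip2) (f _ in1) (f _ in2) (f _ it1) (f _ it2) /=.
  move=> H1 H2; clear -H1 H2; lia.
Qed.


Lemma adj_VS S u v : adj S u v -> u \in VS S /\ v \in VS S.
Proof. case/exists_inP => e eS /orP[] /andP[/eqP h1 /eqP h2]; split; apply/VSP; exists e => //;
  by rewrite /incident ?h1 ?h2 eqxx ?orbT. Qed.

Lemma connect_VS S u v : connect (adj S) u v -> u != v -> u \in VS S.
Proof. case/connectP => [[|z p]] /= => [_ -> |/andP[h _] _ _]; first by rewrite eqxx.
by case: (adj_VS h). Qed.

Lemma connect_map S S' w : S' \subset S ->
  (forall e, e \in S -> e \notin S' -> forall z, incident z e -> z \in VS S' -> z = w) ->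
  forall u v, connect (adj S) u v ->
  connect (adj S') (if u \in VS S' then u else w) (if v \in VS S' then v else w).
Proof.
move=> sS hS u v /connectP [p pP ->] {v}; elim: p u pP => [|z p IH] u /=.
  by move=> _; rewrite connect0.
case/andP => h /IH; apply: connect_trans.
case/exists_inP: h => e eS hends.
have iu : incident u e by case/orP: hends => /andP[/eqP h1 /eqP h2]; rewrite /incident ?h1 ?h2 eqxx ?orbT.
have iz : incident z e by case/orP: hends => /andP[/eqP h1 /eqP h2]; rewrite /incident ?h1 ?h2 eqxx ?orbT.
case: (boolP (e \in S')) => eS'.
  have uS : u \in VS S' by apply/VSP; exists e.
  have zS : z \in VS S' by apply/VSP; exists e.
  by rewrite uS zS; apply: connect1; apply/exists_inP; exists e.
have fw : forall y, incident y e -> (if y \in VS S' then y else w) = w.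
  by move=> y iy; case: ifP => // yS; apply: (hS e).
by rewrite (fw _ iu) (fw _ iz) connect0.
Qed.

Lemma degD1 P e v : e \in P -> deg P v = deg (P :\ e) v + mult e v.
Proof. move=> eP; rewrite -deg1 -degU; last by rewrite disjoint_sym disjoints1 !inE eqxx.
by rewrite setUC setD1K. Qed.

Lemma neg1 e : negative [set e] = neg e.
Proof. rewrite /Defs.negative.
case ne: (neg e).
- suff -> : [set f in [set e] | neg f] = [set e] by rewrite cards1.
  by apply/setP => f; rewrite !inE; case: eqP => // ->.
- suff -> : [set f in [set e] | neg f] = set0 by rewrite cards0.
  by apply/setP => f; rewrite !inE; case: eqP => // ->; rewrite ne.
Qed.

Section Local.
Variables (A : {set E}) (e : E) (s t : V).
Hypotheses (eA : e \notin A) (st : s != t) (ise : incident s e) (ite : incident t e)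
  (tA : t \notin VS A).

Lemma mult_st v : mult e v = (v == s) + (v == t).
Proof.
move: ise ite; rewrite /incident /mult => /orP[] /eqP h1 /orP[] /eqP h2.
- by move: st; rewrite -h1 -h2 eqxx.
- by rewrite h1 h2 !(eq_sym _ v).
- by rewrite h1 h2 !(eq_sym _ v) addnC.
- by move: st; rewrite -h1 -h2 eqxx.
Qed.

Let G' := A :|: [set e].

Lemma degG't : deg G' t = 1.
Proof. rewrite degU ?deg1 ?mult_st ?(deg0 tA) ?eqxx ?(negbTE (negbT _)) //.
  by rewrite eq_sym (negbTE st).
by rewrite disjoint_sym disjoints1. Qed.

Lemma e_notin_min S x0 : S \subset G' -> x0 != t ->
  (forall v, v \in VS S -> v != x0 -> 2 <= deg S v) -> e \notin S.
Proof.
move=> sS xt h; apply/negP => eS.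
have tS : t \in VS S by apply/VSP; exists e.
have := h t tS; rewrite eq_sym xt => /(_ isT).
have := deg_sub t sS; rewrite degG't; lia2.
Qed.

Lemma sub_A S : S \subset G' -> e \notin S -> S \subset A.
Proof. move=> sS eS; apply/subsetP => f fS; move: (subsetP sS f fS); rewrite !inE.
by case/orP => // /eqP h; subst f; rewrite fS in eS. Qed.

Lemma ex_path x P : xypath x t P -> P \subset G' -> x != s ->
  e \in P /\ xypath x s (P :\ e) /\ negative P = negative (P :\ e) (+) neg e.
Proof.
move=> hP sP xs.
have xt := xypath_neq hP.
have eP : e \in P.
  have := xypath_inr hP; case/VSP => f fP tf.
  move: (subsetP sP f fP); rewrite !inE => /orP[] fA; last by rewrite -(eqP fA).
  by exfalso; move/negP: tA; apply; apply/VSP; exists f.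
split => //.
have dP : forall v, deg P v = deg (P :\ e) v + mult e v := fun v => degD1 v eP.
split; last first.
  by rewrite -{1}(setD1K eP) setUC negU ?neg1 // disjoint_sym disjoints1 !inE eqxx.
case: (hP) => _ [cP [dx [dt hi]]].
have P't : deg (P :\ e) t = 0 by move: (dP t) dt; rewrite mult_st eqxx eq_sym (negbTE st);lia2.
have tP' : t \notin VS (P :\ e) by rewrite -deg_pos P't.
have sPe : s \in VS P by apply/VSP; exists e.
have dPs : deg P s = 2 by apply: hi => //; rewrite eq_sym.
have P's : deg (P :\ e) s = 1 by move: (dP s) dPs; rewrite mult_st eqxx (negbTE st);lia2.
have P'x : deg (P :\ e) x = 1 by move: (dP x) dx; rewrite mult_st (negbTE xs) (negbTE xt);lia2.
split => //; split; last first.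
  split => //; split => //.
  move=> v vP' vx vs.
  have vt : v != t by apply: contraNneq tP' => <-.
  have vP : v \in VS P by apply: (VSsubP (subD1set P e)).
  by move: (dP v) (hi v vP vx vt); rewrite mult_st (negbTE vs) (negbTE vt);lia2.
split.
  apply/set0Pn; have : x \in VS (P :\ e) by rewrite -deg_pos P'x.
  by case/VSP => f fP _; exists f.
move=> u v uP vP.
have hm := connect_map (S := P) (S' := P :\ e) (w := s) (subD1set P e).
have := hm _ u v; rewrite uP vP; apply.
- move=> f fP; rewrite !inE fP andbT negbK => /eqP -> z iz zP.
  move: (mult_st z); have : 0 < mult e z by rewrite multP.
  case: (eqVneq z s) => // _; case: (eqVneq z t) => [zt|]; last by rewrite /=; lia2.
  by subst z; rewrite zP in tP'.
- by apply: cP.2; apply: (VSsubP (subD1set P e)).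
Qed.


Lemma ex_tad T x0 : tadpole t T -> T \subset G' -> x0 \notin VS T ->
  tadpole s (T :\ e) /\ T :\ e \subset A.
Proof.
move=> [y [P [C [eT [uC hPC]]]]] sT x0T; subst T.
have sC : C \subset G' by exact: subset_trans (subsetUr _ _) sT.
have sP : P \subset G' by exact: subset_trans (subsetUl _ _) sT.
have eC : e \notin C.
  apply: (e_notin_min (x0 := s)) => // v vC _.
  by rewrite (circuit_deg uC.1 vC).
have sCA := sub_A sC eC.
have tC : t \notin VS C by apply: contra tA; apply: VSsubP sCA.
have sub' : (P :|: C) :\ e \subset A.
  apply/subsetP => f; rewrite !inE => /andP[fe /orP[] fi].
  - by move: (subsetP sP f fi); rewrite !inE (negbTE fe) /= ?orbF.
  - exact: (subsetP sCA).
split => //.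
case: hPC => [[_ [yt tC']]|[hP iPC]]; first by subst y; rewrite tC' in tC.
have [yP yC] := interPy iPC.
have yt : y != t by apply: contraNneq tC => <-.
have eq1 : (P :|: C) :\ e = (P :\ e) :|: C.
  apply/setP => f; rewrite !inE; case: (eqVneq f e) => [->|_]; rewrite ?eqxx /= ?(negbTE eC) //.
rewrite eq1.
case: (eqVneq y s) => [ys|ys]; last first.
  have [eP [hP' _]] := ex_path (xypath_sym hP) sP ys.
  exists y, (P :\ e), C; split => //; split => //; right; split; first exact: xypath_sym.
  apply: inter1 => //; last exact: (xypath_inl hP').
  by move=> v vP vC; apply: (interP iPC) => //; apply: (VSsubP (subD1set P e)).
subst y.
have eP : e \in P.
  have := xypath_inr hP; rewrite -/(s \in VS P).
  case/VSP: (xypath_inl hP) => f fP tf.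
  move: (subsetP sP f fP); rewrite !inE => /orP[] fA _; last by rewrite -(eqP fA).
  by exfalso; move/negP: tA; apply; apply/VSP; exists f.
case: (hP) => _ [cP [dt [ds _]]].
have P's : deg (P :\ e) s = 0 by move: (degD1 s eP) ds; rewrite mult_st eqxx (negbTE st); lia2.
have P't : deg (P :\ e) t = 0 by move: (degD1 t eP) dt; rewrite mult_st eqxx eq_sym (negbTE st); lia2.
have sP' : s \notin VS (P :\ e) by rewrite -deg_pos P's.
have tP' : t \notin VS (P :\ e) by rewrite -deg_pos P't.
have P'0 : P :\ e = set0.
  apply/eqP; apply/negPn/negP => /set0Pn [f fP'].
  set u := (ends f).1.
  have uP' : u \in VS (P :\ e) by apply/VSP; exists f; rewrite // /incident eqxx.
  have uP : u \in VS P := VSsubP (subD1set P e) uP'.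
  have hS : forall g, g \in P -> g \notin P :\ e -> forall z, incident z g -> z \in VS (P :\ e) -> z = s.
    move=> g gP; rewrite !inE gP andbT negbK => /eqP -> z iz zP.
    move: (mult_st z); have : 0 < mult e z by rewrite multP.
    case: (eqVneq z s) => // _; case: (eqVneq z t) => [zt|]; last by rewrite /=; lia2.
    by subst z; rewrite zP in tP'.
  have := connect_map (subD1set P e) hS (cP.2 _ _ uP (xypath_inl hP)).
  rewrite uP' (negbTE tP') => hc.
  have us : u != s by apply: contraNneq sP' => <-.
  by move: hc; rewrite connect_symS => /connect_VS; rewrite eq_sym us => /(_ isT); rewrite (negbTE sP').
exists s, set0, C; rewrite P'0; split => //; split => //; left; split => //.
Qed.

Lemma subD_A S : S \subset G' -> S :\ e \subset A.
Proof. move=> sS; apply: sub_A; last by rewrite !inE eqxx.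
exact: subset_trans (subD1set S e) sS. Qed.

Lemma ex_step x0 Pp Pn Tx Ty Cs : x0 != s -> x0 != t ->
  psi_cover G' x0 t 2 Pp Pn Tx Ty Cs ->
  (forall T, T \in Tx -> t \notin VS T) -> (forall T, T \in Ty -> x0 \notin VS T) ->
  exists Pp' Pn' Ty', psi_cover A x0 s 2 Pp' Pn' Tx Ty' Cs /\
    (forall T, T \in Ty' -> x0 \notin VS T).
Proof.
move=> xs xt K hTx hTy.
have sub : forall S, [|| S \in Pp, S \in Pn, S \in Tx, S \in Ty | S \in Cs] -> S \subset G'.
  by move=> S; apply: psi_sub K.
case: (K) => _ [sp [sn [sx [sy [_ [hp [hn [hx [hy [hc hcnt]]]]]]]]]].
have TxA : forall T, T \in Tx -> T \subset A.
  move=> T hT; apply: sub_A; first by apply: sub; rewrite hT ?orbT.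
  by apply: contra (hTx T hT) => eT; apply/VSP; exists e.
have CsA : forall C, C \in Cs -> C \subset A.
  move=> C hC; have sC : C \subset G' by apply: sub; rewrite hC ?orbT.
  apply: sub_A => //; apply: (e_notin_min (x0 := s)) => // v vC _.
  exact: signed_circuit_deg (hc C hC) vC.
pose d := fun S : {set E} => S :\ e.
exists (map d (if neg e then Pn else Pp)), (map d (if neg e then Pp else Pn)), (map d Ty).
split; last first.
  move=> T /mapP [T0 h ->]; apply: contra (hTy T0 h); apply: VSsubP; exact: subD1set.
split => //; split; first by rewrite size_map; case: ifP.
split; first by rewrite size_map; case: ifP.
split => //; split; first by rewrite size_map sy.
split.
  move=> S; rewrite !mem_cat => /orP[|/orP[|/orP[|/orP[]]]].
  - case/mapP => S0 h ->; apply: subD_A; apply: sub.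
    by move: h; case: ifP => _ ->; rewrite ?orbT.
  - case/mapP => S0 h ->; apply: subD_A; apply: sub.
    by move: h; case: ifP => _ ->; rewrite ?orbT.
  - exact: TxA.
  - by case/mapP => S0 h ->; apply: subD_A; apply: sub; rewrite h ?orbT.
  - exact: CsA.
have gp : forall P, P \in Pp ++ Pn -> xypath x0 t P ->
    xypath x0 s (P :\ e) /\ negative P = negative (P :\ e) (+) neg e.
  move=> P hP h; have sP : P \subset G' by apply: sub; move: hP; rewrite mem_cat => /orP[] ->; rewrite ?orbT.
  by have [_ [g1 g2]] := ex_path h sP xs.
have inPp : forall P, P \in Pp -> P \in Pp ++ Pn by move=> P h; rewrite mem_cat h.
have inPn : forall P, P \in Pn -> P \in Pp ++ Pn by move=> P h; rewrite mem_cat h orbT.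
split.
  move=> P /mapP [P0 h ->].
  case ne: (neg e) in h *.
  - by have [hxy ng] := hn _ h; have [g1 g2] := gp _ (inPn _ h) hxy; split => //; move: ng; rewrite g2 ne ?addbF ?addbT ?negbK.
  - by have [hxy ng] := hp _ h; have [g1 g2] := gp _ (inPp _ h) hxy; split => //; move: ng; rewrite g2 ne ?addbF ?addbT ?negbK.
split.
  move=> P /mapP [P0 h ->].
  case ne: (neg e) in h *.
  - by have [hxy ng] := hp _ h; have [g1 g2] := gp _ (inPp _ h) hxy; split => //; move: ng; rewrite g2 ne ?addbF ?addbT ?negbK.
  - by have [hxy ng] := hn _ h; have [g1 g2] := gp _ (inPn _ h) hxy; split => //; move: ng; rewrite g2 ne ?addbF ?addbT ?negbK.
split => //.
split.
  move=> T /mapP [T0 h ->].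
  have sT : T0 \subset G' by apply: sub; rewrite h ?orbT.
  by have [] := ex_tad (hy T0 h) sT (hTy T0 h).
split => //.
move=> f fA.
have fe : f != e by apply: contraNneq eA => <-.
have fG : f \in G' by rewrite inE fA.
move: (hcnt f fG); rewrite -!/(cnt _ _) !cnt_cat !cnt_mapD //.
by case: ifP => _; lia1.
Qed.

End Local.

Lemma leaf_avoid A s x0 T : tadpole x0 T -> T \subset A -> deg A s <= 1 -> s != x0 -> s \notin VS T.
Proof. move=> hT sT dA sx; apply/negP => sT'.
have h1 := tadpole_deg hT sT' sx; have h2 := deg_sub s sT; clear -h1 h2 dA; lia. Qed.

End Basics.


Section Series.
Variables (V E : finType) (ends : E -> V * V) (neg : E -> bool).
Local Notation VS := (VS ends).
Local Notation deg := (deg ends).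
Local Notation incident := (incident ends).
Local Notation xypath := (xypath ends).
Local Notation tadpole := (tadpole ends neg).
Local Notation psi_cover := (psi_cover ends neg).
Local Notation mult := (mult ends).
Local Notation part := (part).
Variables (n : nat) (x : nat -> V) (p : E -> nat).
Hypothesis hsd : series_decomp ends neg (x 0) (x n) n x p.
Hypothesis hB0 : forall i, i < n -> ~ single_neg_loop ends neg (part p i).

Definition Gk k := [set e | p e < k].

Lemma Gk0 : Gk 0 = set0.
Proof. by apply/setP => e; rewrite !inE. Qed.

Lemma GkS k : Gk k.+1 = Gk k :|: part p k.
Proof. apply/setP => e; rewrite !inE ltnS leq_eqVlt orbC. by []. Qed.

Lemma Gkn : Gk n = [set: E].
Proof. case: hsd => _ [_ [hp _]]; apply/setP => e; by rewrite !inE hp. Qed.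

Lemma Gk_disj k : [disjoint Gk k & part p k].
Proof. rewrite -setI_eq0; apply/eqP/setP => e; rewrite !inE.
by case: (eqVneq (p e) k) => [->|]; rewrite ?ltnn ?andbF. Qed.

Lemma part_info i : i < n -> [/\ connected ends (part p i), x i \in VS (part p i),
  x i.+1 \in VS (part p i) & x i != x i.+1].
Proof. case: hsd => _ [_ [_ [h _]]] lt; have [c [h1 [h2 h3]]] := h i lt; split => //.
by apply/eqP => /h3; apply: hB0. Qed.

Lemma share i j v : i < j -> j < n -> v \in VS (part p i) -> v \in VS (part p j) ->
  j = i.+1 /\ v = x j.
Proof.
case: hsd => _ [_ [_ [_ h]]] ij jn vi vj.
have := (h i j v ij jn).1 (conj vi vj) => hk.
have vj' : v = x j by apply: hk; rewrite ij leqnn.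
case: (ltngtP j i.+1) => [ji'|ji|ej]; [by exfalso; lia | | by split].
have e1 : v = x i.+1 by apply: hk; apply/andP; split; lia.
have e2 : v = x i.+2 by apply: hk; apply/andP; split; lia.
have lt : i.+1 < n by lia.
have [_ _ _] := part_info lt; by rewrite -e1 -e2 eqxx.
Qed.

Lemma VSGk k v : v \in VS (Gk k) -> exists2 i, i < k & v \in VS (part p i).
Proof. case/VSP => e; rewrite inE => ek ie; exists (p e) => //; apply/VSP; exists e => //.
by rewrite inE. Qed.

Lemma F1 k v : 0 < k -> k < n -> v \in VS (Gk k) -> v \in VS (part p k) -> v = x k.
Proof. move=> k0 kn /VSGk [i ik vi] vk; by have [_ ->] := share ik kn vi vk. Qed.

Lemma F2 k : k < n -> x k.+1 \notin VS (Gk k).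
Proof.
move=> kn; apply/negP => h.
case: k kn h => [|k] kn h; first by move: h; rewrite Gk0 VS0 inE.
have [c h1 h2 h3] := part_info kn.
have := F1 (k:=k.+1) (ltn0Sn k) kn h h2; move: h3; rewrite eq_sym => /eqP; done.
Qed.

Lemma F3 k : 0 < k -> k < n -> x 0 \notin VS (part p k).
Proof.
move=> k0 kn; apply/negP => h.
have n0 : 0 < n := leq_ltn_trans (leq0n _) kn.
have [c h1 _ h3] := part_info n0.
have [k1 e] := share k0 kn h1 h; subst k.
by move: h3; rewrite e eqxx.
Qed.

Lemma F4 k : k < n.-1 -> x n \notin VS (part p k).
Proof.
move=> kn; apply/negP => h.
have n1 : n.-1 < n by lia.
have [c _ h2 h3] := part_info n1.
have nn : n.-1.+1 = n by lia.
rewrite nn in h2 h3.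
have [e1 e2] := share kn n1 h h2.
by move: h3; rewrite -e2 eqxx.
Qed.

Lemma F4' k : k <= n.-1 -> x n \notin VS (Gk k).
Proof. move=> kn; apply/negP => /VSGk [i ik vi].
by move/negP: (F4 (leq_trans ik kn)). Qed.

Lemma F5 k : 0 < k -> k <= n -> x 0 \in VS (Gk k).
Proof. move=> k0 kn; have [_ h _ _] := part_info (leq_trans k0 kn).
by apply: (VSsubP (S := part p 0)) h; apply/subsetP => e; rewrite !inE => /eqP ->. Qed.

Lemma B1_edge i : i < n -> ~ inB2 x p i -> exists e, part p i = [set e].
Proof.
move=> lt nb; have [[c _] h1 h2 h3] := part_info lt.
apply/cards1P; rewrite eqn_leq card_gt0 c andbT leqNgt; apply/negP => h.
by apply: nb; split.
Qed.

Lemma mult_le1 e v : (ends e).1 != (ends e).2 -> mult e v <= 1.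
Proof. move=> h; rewrite /mult; case: (eqVneq (ends e).1 v) => [e1v|_] /=; last by case: (_ == v).
by rewrite -e1v eq_sym (negbTE h). Qed.


Lemma B1_path k : k < n -> ~ inB2 x p k -> xypath (x k) (x k.+1) (part p k).
Proof. move=> kn nb; have [e he] := B1_edge kn nb; have [_ h1 h2 h3] := part_info kn.
by rewrite he in h1 h2 *; apply: edge_path. Qed.

Lemma hAB k : 0 < k -> k < n ->
  forall v, v \in VS (Gk k) -> v \in VS (part p k) -> v = x k.
Proof. by move=> k0 kn v; apply: F1. Qed.

Lemma notVS_sub (S A : {set E}) v : S \subset A -> v \notin VS A -> v \notin VS S.
Proof. by move=> sA; apply: contra; apply: VSsubP. Qed.

Lemma VS1_inc e v : v \in VS [set e] -> incident v e.
Proof. by case/VSP => f; rewrite inE => /eqP ->. Qed.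

Lemma VS1_nonloop e u v : u \in VS [set e] -> v \in VS [set e] -> u != v -> (ends e).1 != (ends e).2.
Proof. rewrite VS1 !inE => hu hv; apply: contraNneq => h.
by move: hu hv; rewrite h !orbb => /eqP -> /eqP ->. Qed.

Definition Inv' j : Prop := exists Pp Pn Tx Ty Cs, psi_cover (Gk j) (x 0) (x j) 2 Pp Pn Tx Ty Cs /\
  (forall T, T \in Ty -> x 0 \notin VS T) /\ (1 < j -> forall T, T \in Tx -> x j \notin VS T).

Lemma leaf_deg j : 1 < j -> j <= n -> ~ inB2 x p j.-1 -> deg (Gk j) (x j) <= 1.
Proof.
case: j => [|i] //= i1 jn nb.
have iN : i < n by [].
rewrite GkS degU ?Gk_disj // (deg0 (F2 iN)) add0n.
have [e he] := B1_edge iN nb; have [_ h1 h2 h3] := part_info iN.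
rewrite he in h1 h2 *; rewrite deg1; apply: mult_le1; exact: VS1_nonloop h1 h2 h3.
Qed.

Lemma Inv'_step j : 0 < j -> j < n -> (forall i, 0 < i < n -> ~ inB2 x p i) -> Inv' j.+1 -> Inv' j.
Proof.
move=> j0 jn hnb [Pp [Pn [Tx [Ty [Cs [K [hy hx]]]]]]].
have nb : ~ inB2 x p j by apply: hnb; rewrite j0.
have [e he] := B1_edge jn nb.
have [_ h1 h2 h3] := part_info jn.
have x0s : x 0 != x j by apply: contraNneq (F3 j0 jn) => ->.
have x0t : x 0 != x j.+1 by apply: contraNneq (F3 j0 jn) => ->.
rewrite he in h1 h2.
have eA : e \notin Gk j by rewrite inE -ltnNge; move/setP: he => /(_ e); rewrite !inE eqxx => /eqP ->.
have K' : psi_cover (Gk j :|: [set e]) (x 0) (x j.+1) 2 Pp Pn Tx Ty Cs by rewrite -he -GkS.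
have [Pp' [Pn' [Ty' [K2 hy2]]]] := ex_step eA h3 (VS1_inc h1) (VS1_inc h2) (F2 jn) x0s x0t K'
  (hx j0) hy.
exists Pp', Pn', Tx, Ty', Cs; split => //; split => //.
move=> j1 T hT.
case: (K2) => _ [_ [_ [_ [_ [_ [_ [_ [hxT _]]]]]]]].
apply: (leaf_avoid (A := Gk j) (hxT T hT)); first by apply: (psi_sub (S := T) K2); rewrite hT !orbT.
  apply: leaf_deg => //; first exact: ltnW.
  by apply: hnb; apply/andP; split; lia.
by rewrite eq_sym.
Qed.

Lemma Inv'_all d : d <= n.-1 -> (forall i, 0 < i < n -> ~ inB2 x p i) -> Inv' n -> Inv' (n - d).
Proof.
move=> dn hnb I; elim: d dn => [|d IH] dn; first by rewrite subn0.
have h := IH (ltnW dn).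
have e : (n - d.+1).+1 = n - d by lia.
apply: Inv'_step; [lia | lia | exact: hnb | by rewrite e].
Qed.

Lemma exclusion : 0 < n -> (forall i, 0 < i < n -> ~ inB2 x p i) ->
  (exists Pp Pn Tx Ty Cs, psi_cover [set: E] (x 0) (x n) 2 Pp Pn Tx Ty Cs /\
    (forall T, T \in Tx -> x n \notin VS T) /\ (forall T, T \in Ty -> x 0 \notin VS T)) ->
  exists Pp Pn Tx Ty Cs, psi_cover (part p 0) (x 0) (x 1) 2 Pp Pn Tx Ty Cs /\
    (forall T, T \in Ty -> x 0 \notin VS T).
Proof.
move=> n0 hnb [Pp [Pn [Tx [Ty [Cs [K [hx hy]]]]]]].
have I : Inv' n by exists Pp, Pn, Tx, Ty, Cs; rewrite Gkn.
have := Inv'_all (leqnn _) hnb I.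
have -> : n - n.-1 = 1 by lia.
case=> Pp1 [Pn1 [Tx1 [Ty1 [Cs1 [K1 [hy1 _]]]]]].
by exists Pp1, Pn1, Tx1, Ty1, Cs1; rewrite GkS Gk0 set0U in K1.
Qed.

Hypothesis hn2 : 2 <= n.
Hypothesis hg : forall i, i < n -> inB2 x p i -> exists Pp Pn Tx Ty Cs,
  psi_cover (part p i) (x i) (x i.+1) 2 Pp Pn Tx Ty Cs /\
  ((forall j, j < n -> inB2 x p j -> j = 0) -> forall T, T \in Ty -> x 0 \notin VS T) /\
  ((forall j, j < n -> inB2 x p j -> j = n.-1) -> forall T, T \in Tx -> x n \notin VS T).

Definition Inv k : Prop :=
  ((forall i, i < k -> ~ inB2 x p i) /\ (k = 0 \/ xypath (x 0) (x k) (Gk k))) \/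
  (0 < k /\ exists Pp Pn Tx Ty Cs, psi_cover (Gk k) (x 0) (x k) 2 Pp Pn Tx Ty Cs /\
     (forall T, T \in Tx -> x n \notin VS T) /\
     ((forall T, T \in Ty -> x 0 \notin VS T) \/ exists2 i, k <= i < n & inB2 x p i)).

Lemma Inv0 : Inv 0.
Proof. by left; split => //; left. Qed.

Lemma Inv_step k : k < n -> Inv k -> Inv k.+1.
Proof.
move=> kn I.
have dk := Gk_disj k.
case: (classic (inB2 x p k)) => hb; last first.
  have hP := B1_path kn hb.
  case: I => [[nb [k0|hQ]]|[k0 [Pp [Pn [Tx [Ty [Cs [K [hx hy]]]]]]]]].
  - subst k; left; split; first by move=> i; rewrite ltnS leqn0 => /eqP ->.
    by right; rewrite GkS Gk0 set0U.
  - have k0 : 0 < k by case: (k) hQ => // /xypath_neq; rewrite eqxx.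
    left; split; first by move=> i; rewrite ltnS leq_eqVlt => /orP[/eqP ->|/nb].
    right; rewrite GkS; exact: (glue_path dk (hAB k0 kn) (subxx _) (subxx _) hQ hP).
  - right; split => //.
    have [Pp' [Pn' [Ty' [K' hT]]]] := cover_path dk (hAB k0 kn) K hP.
    exists Pp', Pn', Tx, Ty', Cs; rewrite GkS; split => //; split => //.
    case: hy => [hy|[i /andP[ki iN] bi]].
    + left => T /hT [T0 h0 ->]; rewrite VSU in_setU negb_or (hy _ h0) /=.
      exact: F3.
    + right; exists i => //; rewrite iN andbT ltn_neqAle ki andbT.
      by apply/eqP => ki'; subst i; exact: hb bi.
have [Pp [Pn [Tx [Ty [Cs [K [g0 gN]]]]]]] := hg kn hb.
have subK : forall S, [|| S \in Pp, S \in Pn, S \in Tx, S \in Ty | S \in Cs] -> S \subset part p k.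
  by move=> S; apply: psi_sub K.
have TyA : k != 0 -> forall T, T \in Ty -> x 0 \notin VS T.
  move=> k0 T hT; apply: (notVS_sub (subK T _)); first by rewrite hT !orbT.
  by apply: F3 => //; rewrite lt0n.
case: I => [[nb [k0|hQ]]|[k0 [Pp1 [Pn1 [Tx1 [Ty1 [Cs1 [K1 [hx1 hy1]]]]]]]]].
- subst k; right; split => //.
  exists Pp, Pn, Tx, Ty, Cs; rewrite GkS Gk0 set0U; split => //; split.
    move=> T hT; apply: (notVS_sub (subK T _)); first by rewrite hT !orbT.
    by apply: F4; lia.
  case: (classic (exists2 j, (0 < j < n) & inB2 x p j)) => [[j /andP[j0 jn] bj]|nj].
  + by right; exists j => //; rewrite j0 jn.
  + left; apply: g0 => j jn bj; apply/eqP; rewrite -leqn0 leqNgt; apply/negP => j0.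
    by apply: nj; exists j; rewrite ?j0.
- have k0 : 0 < k by case: (k) hQ => // /xypath_neq; rewrite eqxx.
  right; split => //.
  have K' := psi_swap K.
  have dk' : [disjoint part p k & Gk k] by rewrite disjoint_sym.
  have hBA : forall v, v \in VS (part p k) -> v \in VS (Gk k) -> v = x k.
    by move=> v h1 h2; apply: F1.
  have [Pp' [Pn' [Ty' [K'' hT]]]] := cover_path dk' hBA K' (xypath_sym hQ).
  exists Pp', Pn', Ty', Ty, Cs; rewrite GkS setUC; split; first exact: psi_swap.
  split; last by left; apply: TyA; rewrite -lt0n.
  move=> T /hT [T0 h0 ->]; rewrite VSU in_setU negb_or; apply/andP; split; last first.
    by apply: F4'; lia.
  case: (ltnP k n.-1) => kn1.
    apply: (notVS_sub (subK T0 _)); first by rewrite h0 !orbT.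
    exact: F4.
  apply: gN => // j jn bj; apply/eqP; rewrite eqn_leq; apply/andP; split; first by lia.
  rewrite leqNgt; apply/negP => jk; have jk' : j < k by lia.
  exact: (nb j jk' bj).
- right; split => //.
  have [Pp' [Pn' [Cs' K']]] := cover_cover dk (hAB k0 kn) K1 K.
  exists Pp', Pn', Tx1, Ty, Cs'; rewrite GkS; split => //; split => //.
  by left; apply: TyA; rewrite -lt0n.
Qed.

Lemma Inv_all k : k <= n -> Inv k.
Proof. elim: k => [_|k IH kn]; first exact: Inv0.
apply: Inv_step => //; apply: IH; exact: ltnW. Qed.

Lemma construction : (exists2 i, i < n & inB2 x p i) ->
  exists Pp Pn Tx Ty Cs, psi_cover [set: E] (x 0) (x n) 2 Pp Pn Tx Ty Cs /\
    (forall T, T \in Tx -> x n \notin VS T) /\ (forall T, T \in Ty -> x 0 \notin VS T).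
Proof.
move=> [i iN bi]; case: (Inv_all (leqnn n)) => [[nb _]|[_ [Pp [Pn [Tx [Ty [Cs [K [hx hy]]]]]]]]].
  by case: (nb i iN bi).
exists Pp, Pn, Tx, Ty, Cs; rewrite -Gkn; split => //; split => //.
by case: hy => // -[j /andP[nj jn]]; move: (leq_ltn_trans nj jn); rewrite ltnn.
Qed.

End Series.


Section Rev.
Variables (V E : finType) (ends : E -> V * V) (neg : E -> bool).
Variables (n : nat) (x : nat -> V) (p : E -> nat).
Hypothesis hsd : series_decomp ends neg (x 0) (x n) n x p.
Hypothesis n0 : 0 < n.

Definition xr i := x (n - i).
Definition pr e := n.-1 - p e.

Lemma part_rev i : i < n -> part pr i = part p (n.-1 - i).
Proof. case: hsd => _ [_ [hp _]] iN; apply/setP => e; rewrite !inE /pr.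
move: (hp e) => h; apply/eqP/eqP => ?; lia. Qed.

Lemma sd_rev : series_decomp ends neg (xr 0) (xr n) n xr pr.
Proof.
case: (hsd) => _ [_ [hp [hi hv]]].
split => //; split => //; split; first by move=> e; rewrite /pr; lia.
split.
  move=> i iN; rewrite part_rev //.
  have jN : n.-1 - i < n by lia.
  have [c [h1 [h2 h3]]] := hi _ jN.
  have e1 : xr i = x (n.-1 - i).+1 by rewrite /xr; congr x; lia.
  have e2 : xr i.+1 = x (n.-1 - i) by rewrite /xr; congr x; lia.
  rewrite e1 e2; split => //; split => //; split => //.
  by rewrite -h3; split => ->.
move=> i j v ij jN.
rewrite part_rev ?part_rev //; last by lia.
have i'j' : n.-1 - j < n.-1 - i by lia.
have j'N : n.-1 - i < n by lia.
rewrite and_comm (hv _ _ v i'j' j'N); split.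
- move=> h k /andP[ik kj]; rewrite /xr; apply: h; apply/andP; split; lia.
- move=> h k /andP[ik kj]; have -> : k = n - (n - k) by lia.
  apply: h; apply/andP; split; lia.
Qed.

Lemma inB2_rev i : i < n -> inB2 xr pr i <-> inB2 x p (n.-1 - i).
Proof.
move=> iN; rewrite /inB2 part_rev //.
have e1 : xr i = x (n.-1 - i).+1 by rewrite /xr; congr x; lia.
have e2 : xr i.+1 = x (n.-1 - i) by rewrite /xr; congr x; lia.
by rewrite e1 e2 eq_sym.
Qed.

End Rev.

Theorem mainTheorem3 (V E : finType) (ends : E -> V * V) (neg : E -> bool)
  (n : nat) (x : nat -> V) (p : E -> nat) :
  (* G has no isolated vertices *)
  (forall v : V, exists e : E, incident ends v e) ->
  (* G = S(H_1,...,H_n) with H_{i+1} = part p i, terminals x i, x i.+1 *)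
  series_decomp ends neg (x 0) (x n) n x p ->
  (* n = |B(G)| is maximal *)
  (forall m x' p', series_decomp ends neg (x 0) (x n) m x' p' -> m <= n) ->
  2 <= n ->
  (* B_0(G) is empty *)
  (forall i, i < n -> ~ single_neg_loop ends neg (part p i)) ->
  (* B_2(G) is nonempty *)
  (exists i, i < n /\ inB2 x p i) ->
  (* every part in B_2(G) has a Psi(2)-cover *)
  (forall i, i < n -> inB2 x p i -> has_psi_cover ends neg (part p i) (x i) (x i.+1) 2) ->
  let P1 := exists Pp Pn Tx Ty Cs,
      psi_cover ends neg [set: E] (x 0) (x n) 2 Pp Pn Tx Ty Cs /\
      (forall T, T \in Tx -> x n \notin VS ends T) /\
      (forall T, T \in Ty -> x 0 \notin VS ends T) in
  let P2 := (forall i, i < n -> (inB2 x p i <-> i = 0)) /\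
      (forall Pp Pn Tx Ty Cs,
         psi_cover ends neg (part p 0) (x 0) (x 1) 2 Pp Pn Tx Ty Cs ->
         exists T, T \in Ty /\ x 0 \in VS ends T) in
  let P3 := (forall i, i < n -> (inB2 x p i <-> i = n.-1)) /\
      (forall Pp Pn Tx Ty Cs,
         psi_cover ends neg (part p n.-1) (x n.-1) (x n) 2 Pp Pn Tx Ty Cs ->
         exists T, T \in Tx /\ x n \in VS ends T) in
  (P1 /\ ~ P2 /\ ~ P3) \/ (~ P1 /\ P2 /\ ~ P3) \/ (~ P1 /\ ~ P2 /\ P3).
Proof.
move=> hiso hsd hmax hn2 hB0 hB2 hcov P1 P2 P3.
have n0 : 0 < n by lia.
have nP12 : P1 -> ~ P2.
  move=> HP1 [hb0 hall].
  have hnb : forall i, 0 < i < n -> ~ inB2 x p i.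
    move=> i /andP[i0 iN] bi; have := (hb0 i iN).1 bi; lia.
  have [Pp' [Pn' [Tx' [Ty' [Cs' [K' hy']]]]]] := exclusion hsd hB0 n0 hnb HP1.
  have [T [hT xT]] := hall _ _ _ _ _ K'.
  by move: (hy' T hT); rewrite xT.
have nP13 : P1 -> ~ P3.
  move=> [Pp [Pn [Tx [Ty [Cs [K [hx hy]]]]]]] [hb hall].
  have hsd' := sd_rev hsd n0.
  have hB0' : forall i, i < n -> ~ single_neg_loop ends neg (part (pr n p) i).
    by move=> i iN; rewrite (part_rev hsd n0) //; apply: hB0; lia.
  have hnb' : forall i, 0 < i < n -> ~ inB2 (xr n x) (pr n p) i.
    move=> i /andP[i0 iN] /(inB2_rev hsd n0 iN) bi.
    have iN' : n.-1 - i < n by lia.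
    have := (hb _ iN').1 bi; lia.
  have P1' : exists Pp Pn Tx Ty Cs, psi_cover ends neg [set: E] (xr n x 0) (xr n x n) 2 Pp Pn Tx Ty Cs /\
    (forall T, T \in Tx -> xr n x n \notin VS ends T) /\ (forall T, T \in Ty -> xr n x 0 \notin VS ends T).
    exists Pp, Pn, Ty, Tx, Cs; rewrite /xr subn0 subnn; split; first exact: psi_swap.
    by split.
  have [Pp' [Pn' [Tx' [Ty' [Cs' [K' hy']]]]]] := exclusion hsd' hB0' n0 hnb' P1'.
  move: K' hy'; rewrite (part_rev hsd n0) // subn0 /xr subn0 subn1 => K' hy'.
  have [T [hT xT]] := hall _ _ _ _ _ (psi_swap K').
  by move: (hy' T hT); rewrite xT.
have nP23 : P2 -> ~ P3.
  move=> [h2 _] [h3 _]; case: hB2 => i [iN bi].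
  have := (h2 i iN).1 bi; have := (h3 i iN).1 bi; lia.
case: (classic P2) => HP2.
  by right; left; split; [move/nP12|split => // /nP23].
case: (classic P3) => HP3.
  by right; right; split; [move/nP13|split].
left; split => //.
have hB2' : exists2 i, i < n & inB2 x p i by case: hB2 => i [iN bi]; exists i.
apply: (construction hsd hB0 hn2) => // i iN bi.
case: (classic (forall j, j < n -> inB2 x p j -> j = 0)) => c0.
  have i0 : i = 0 by apply: c0.
  subst i.
  have : ~ (forall Pp Pn Tx Ty Cs, psi_cover ends neg (part p 0) (x 0) (x 1) 2 Pp Pn Tx Ty Cs ->
         exists T, T \in Ty /\ x 0 \in VS ends T).
    move=> h; apply: HP2; split => // j jN; split; first exact: c0.
    by move=> ->.
  move=> /not_all_ex_not [Pp]; move=> /not_all_ex_not [Pn]; move=> /not_all_ex_not [Tx].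
  move=> /not_all_ex_not [Ty]; move=> /not_all_ex_not [Cs] hK.
  case: (classic (psi_cover ends neg (part p 0) (x 0) (x 1) 2 Pp Pn Tx Ty Cs)) => K; last first.
    by exfalso; apply: hK => K'; case: (K K').
  exists Pp, Pn, Tx, Ty, Cs; split => //; split.
    move=> _ T hT; apply/negP => xT; apply: hK => _; by exists T.
  move=> c1; have := c1 0 iN bi; lia.
case: (classic (forall j, j < n -> inB2 x p j -> j = n.-1)) => c1.
  have i1 : i = n.-1 by apply: c1.
  subst i.
  have nn : n.-1.+1 = n by lia.
  have : ~ (forall Pp Pn Tx Ty Cs, psi_cover ends neg (part p n.-1) (x n.-1) (x n) 2 Pp Pn Tx Ty Cs ->
         exists T, T \in Tx /\ x n \in VS ends T).
    move=> h; apply: HP3; split => // j jN; split; first exact: c1.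
    by move=> ->.
  move=> /not_all_ex_not [Pp]; move=> /not_all_ex_not [Pn]; move=> /not_all_ex_not [Tx].
  move=> /not_all_ex_not [Ty]; move=> /not_all_ex_not [Cs] hK.
  case: (classic (psi_cover ends neg (part p n.-1) (x n.-1) (x n) 2 Pp Pn Tx Ty Cs)) => K; last first.
    by exfalso; apply: hK => K'; case: (K K').
  exists Pp, Pn, Tx, Ty, Cs; rewrite nn; split => //; split => //.
  move=> _ T hT; apply/negP => xT; apply: hK => _; by exists T.
have [Pp [Pn [Tx [Ty [Cs K]]]]] := hcov i iN bi.
by exists Pp, Pn, Tx, Ty, Cs; split => //; split.
Qed.
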